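(* Let $W$ be an affine Weyl group, $x\in W$, and let $r_1,\dots,r_n$ be reflections with $H_{r_t}=H_{\alpha,c+t}$ ($1\le t\le n$) for some root $\alpha$ and $c\in\mathbb{Z}$, such that $\ell(r_t\cdots r_1x)>\ell(r_{t-1}\cdots r_1x)$ for all $1\le t\le n$. Then $H^{\mathbf 1}_{r_{t-1}}\subseteq H^{\mathbf 1}_{r_t}$ for all $3\le t\le n$.
   Context: $W$ is the affine Weyl group of a crystallographic root system $\Phi$ in Euclidean space $E$; for $\beta\in\Phi$, $k\in\mathbb{Z}$, $H_{\beta,k}=\{v:\langle v,\beta\rangle=k\}$ and $s_{\beta;k}$ is the orthogonal reflection in it; these are the reflections of $W$, and $H_r$ denotes the hyperplane of the reflection $r$. Elements of $W$ are identified with alcoves ($w\mapsto wA_0$, $A_0$ the fundamental alcove, identified with $1$). $\ell$ is Coxeter length. For a reflection $r$, $H^{\mathbf 1}_r=\{y\in W:\ell(ry)>\ell(y)\}$ is the set of alcoves on the same side of $H_r$ as the identity alcove, and $H^\infty_r=\{y\in W:\ell(ry)<\ell(y)\}$ is the other side. *)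

(* Defs.v *)
From HB Require Import structures.
From mathcomp Require Import all_boot all_order all_algebra.
From mathcomp Require Import boolp reals.
Set Implicit Arguments. Unset Strict Implicit. Unset Printing Implicit Defensive.
Import Order.TTheory GRing.Theory Num.Theory.
Local Open Scope ring_scope.

Section AffineWeyl.
Variables (R : realType) (d : nat).
Notation E := 'rV[R]_d.

Definition dot (u v : E) : R := (u *m v^T) 0 0.

Definition refl (beta : E) (k : int) (v : E) : E :=
  v - ((2 * (dot v beta - k%:~R)) / dot beta beta) *: beta.

Definition root_system (Phi : seq E) : Prop :=
  [/\ forall b, b \in Phi -> b != 0,
      forall a b, a \in Phi -> b \in Phi -> refl a 0 b \in Phi,
      forall a b, a \in Phi -> b \in Phi ->
        exists z : int, 2 * dot b a / dot a a = z%:~R,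
      forall a (c : R), a \in Phi -> c *: a \in Phi -> c = 1 \/ c = -1
    & (<<Phi>>%VS == fullv)].

Definition word_map (s : seq (E * int)) : E -> E :=
  foldr (fun bk f => refl bk.1 bk.2 \o f) id s.

Definition inW (Phi : seq E) (w : E -> E) : Prop :=
  exists s : seq (E * int), all (fun bk => bk.1 \in Phi) s /\ w = word_map s.

Definition regular (Phi : seq E) (p : E) : Prop :=
  forall b (k : int), b \in Phi -> dot p b != k%:~R.

(* q lies in the closure of the alcove containing the regular point p *)
Definition in_closure (Phi : seq E) (p q : E) : Prop :=
  forall b (k : int), b \in Phi -> 0 <= (dot q b - k%:~R) * (dot p b - k%:~R).

(* p is a point of the fundamental alcove A_0: p is regular and 0 lies in the
   closure of its alcove (i.e. 0 < <p,b> < 1 for every root b with <p,b> > 0) *)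
Definition fundamental_point (Phi : seq E) (p : E) : Prop :=
  regular Phi p /\ in_closure Phi p 0.

(* H_{beta,k} is a wall of the alcove A_0 containing p *)
Definition wall (Phi : seq E) (p : E) (b : E) (k : int) : Prop :=
  b \in Phi /\
  exists q : E, [/\ dot q b = k%:~R, in_closure Phi p q &
     forall g (m : int), g \in Phi -> dot q g = m%:~R ->
       forall v : E, dot v g = m%:~R <-> dot v b = k%:~R].

(* words in the simple reflections (reflections in the walls of A_0) *)
Definition simple_word (Phi : seq E) (p : E) (s : seq (E * int)) : Prop :=
  forall bk, bk \in s -> wall Phi p bk.1 bk.2.

Definition has_word_of_size (Phi : seq E) (p : E) (w : E -> E) (m : nat) : bool :=
  `[< exists s, simple_word Phi p s /\ size s = m /\ w = word_map s >].

Definition ell (Phi : seq E) (p : E) (w : E -> E) : nat :=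
  match pselect (exists m, has_word_of_size Phi p w m) with
  | left h => ex_minn h
  | right _ => 0%N
  end.

Fixpoint prodr (r : nat -> E -> E) (t : nat) : E -> E :=
  match t with 0%N => id | t'.+1 => r t'.+1 \o prodr r t' end.

Definition H1 (Phi : seq E) (p : E) (r : E -> E) (y : E -> E) : Prop :=
  inW Phi y /\ (ell Phi p y < ell Phi p (r \o y))%N.

End AffineWeyl.

(* Main.v *)
Require Import Defs.
From HB Require Import structures.
From mathcomp Require Import all_boot all_order all_algebra.
From mathcomp Require Import boolp reals.
Import Order.TTheory GRing.Theory Num.Theory.
Local Open Scope ring_scope.
Set Implicit Arguments. Unset Strict Implicit.

Lemma dot_sum (R : realType) d (u v : 'rV[R]_d) : dot u v = \sum_i u 0 i * v 0 i.
Proof. by rewrite /dot mxE; apply: eq_bigr => i _; rewrite mxE. Qed.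

Lemma dotC (R : realType) d (u v : 'rV[R]_d) : dot u v = dot v u.
Proof. by rewrite !dot_sum; apply: eq_bigr => i _; rewrite mulrC. Qed.

Lemma dotDl (R : realType) d (u w v : 'rV[R]_d) : dot (u + w) v = dot u v + dot w v.
Proof. by rewrite /dot mulmxDl mxE. Qed.

Lemma dotZl (R : realType) d a (u v : 'rV[R]_d) : dot (a *: u) v = a * dot u v.
Proof. by rewrite /dot -scalemxAl mxE. Qed.

Lemma dotNl (R : realType) d (u v : 'rV[R]_d) : dot (- u) v = - dot u v.
Proof. by rewrite -scaleN1r dotZl mulN1r. Qed.

Lemma dotBl (R : realType) d (u w v : 'rV[R]_d) : dot (u - w) v = dot u v - dot w v.
Proof. by rewrite dotDl dotNl. Qed.

Lemma dotDr (R : realType) d (u w v : 'rV[R]_d) : dot v (u + w) = dot v u + dot v w.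
Proof. by rewrite dotC dotDl !(dotC v). Qed.
Lemma dotZr (R : realType) d a (u v : 'rV[R]_d) : dot v (a *: u) = a * dot v u.
Proof. by rewrite dotC dotZl dotC. Qed.
Lemma dotBr (R : realType) d (u w v : 'rV[R]_d) : dot v (u - w) = dot v u - dot v w.
Proof. by rewrite dotC dotBl !(dotC v). Qed.

Lemma dot_gt0 (R : realType) d (v : 'rV[R]_d) : v != 0 -> 0 < dot v v.
Proof.
move=> hv; rewrite dot_sum lt_def sumr_ge0 ?andbT; last by move=> i _; rewrite -expr2 sqr_ge0.
apply: contra hv => /eqP h; apply/eqP/rowP => i.
have hge : forall j : 'I_d, true -> 0 <= v 0 j * v 0 j by move=> j _; rewrite -expr2 sqr_ge0.
have := psumr_eq0P hge h (i := i) isT.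
by move/eqP; rewrite mulf_eq0 orbb mxE => /eqP.
Qed.

From mathcomp Require Import ring lra zify.

Lemma reflE (R : realType) d (b v : 'rV[R]_d) (j : int) :
  refl b j v = v - ((2 * (dot v b - j%:~R)) / dot b b) *: b.
Proof. by []. Qed.

Lemma dot_refl (R : realType) d (b v w : 'rV[R]_d) (j : int) :
  dot (refl b j v) w = dot v w - ((2 * (dot v b - j%:~R)) / dot b b) * dot b w.
Proof. by rewrite reflE dotBl dotZl. Qed.

Lemma dotbb_neq0 (R : realType) d (b : 'rV[R]_d) : b != 0 -> dot b b != 0.
Proof. by move/dot_gt0; rewrite lt0r => /andP[]. Qed.

Lemma refl_invol (R : realType) d (b v : 'rV[R]_d) (j : int) :
  b != 0 -> refl b j (refl b j v) = v.
Proof.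
move=> /dotbb_neq0 hN.
rewrite [in LHS]reflE dot_refl; apply/rowP => i; rewrite !mxE.
set N := dot b b; set x := dot v b; set jj := j%:~R.
field; exact hN.
Qed.

Lemma conj_dot (R : realType) d (b be v : 'rV[R]_d) (j k n : int) :
  b != 0 -> n%:~R = 2 * dot be b / dot b b ->
  dot (refl b j v) be - k%:~R = dot v (refl b 0 be) - (k - n * j)%:~R.
Proof.
move=> /dotbb_neq0 hN hn.
rewrite dot_refl [refl b 0 be]reflE dotBr dotZr rmorphB rmorphM /= hn mulr0z subr0.
rewrite (dotC b be) (dotC v b).
field; exact hN.
Qed.

Lemma conj_norm (R : realType) d (b be : 'rV[R]_d) :
  b != 0 -> dot (refl b 0 be) (refl b 0 be) = dot be be.
Proof.
move=> /dotbb_neq0 hN.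
rewrite !reflE !(dotBr, dotBl, dotZr, dotZl) mulr0z !subr0 (dotC b be).
field; exact hN.
Qed.

Lemma conj_refl (R : realType) d (b be v : 'rV[R]_d) (j k n : int) :
  b != 0 -> be != 0 -> n%:~R = 2 * dot be b / dot b b ->
  refl be k (refl b j v) = refl b j (refl (refl b 0 be) (k - n * j) v).
Proof.
move=> hb hbe hn.
have hN := dotbb_neq0 hb; have hB := dotbb_neq0 hbe.
rewrite !reflE !(dotBr, dotBl, dotZr, dotZl) !mulr0z !subr0 ?(dotC b be) ?(dotC b v).
apply/rowP => i; rewrite !mxE rmorphB rmorphM /= hn.
field.
rewrite hN hB /=.
have -> : forall a m N : R, a * N - 2 * m * m - 2 * m * (m - 2 * m) = a * N by move=> *; ring.
by rewrite mulf_neq0.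
Qed.
Lemma sign1 (R : realType) (a b c : R) : a != 0 -> 0 <= b * a -> b * c < 0 -> a * c < 0.
Proof. move=> ha h1 h2. have : 0 < a * a by rewrite lt_def mulf_neq0 //= -expr2 sqr_ge0.
nra. Qed.
Lemma sign2 (R : realType) (a b c : R) : 0 <= a * b -> 0 <= a * c -> c * b < 0 -> a = 0.
Proof.
move=> h1 h2 h3; apply/eqP; apply/negPn/negP => ha.
have : 0 < a * a by rewrite lt_def mulf_neq0 //= -expr2 sqr_ge0.
nra. Qed.
Lemma fin (R : realType) (P a Y k : R) :
  0 < (a - k) * (P - k) -> 0 < (k - a - 1) * (P - k - 1) -> 0 < (a - k) * (P - k - 2) ->
  0 < (Y - k - 1) * (P - k - 1) -> 0 < (Y - k - 2) * (P - k - 2).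
Proof. move=> *; nra. Qed.

Lemma rs_neq0 (R : realType) d (Phi : seq 'rV[R]_d) b :
  root_system Phi -> b \in Phi -> b != 0.
Proof. by case=> h *; apply: h. Qed.

Lemma rs_refl (R : realType) d (Phi : seq 'rV[R]_d) a b :
  root_system Phi -> a \in Phi -> b \in Phi -> refl a 0 b \in Phi.
Proof. by case=> _ h *; apply: h. Qed.

Lemma rs_int (R : realType) d (Phi : seq 'rV[R]_d) a b :
  root_system Phi -> a \in Phi -> b \in Phi -> exists z : int, z%:~R = 2 * dot b a / dot a a.
Proof. by case=> _ _ h _ _ ha hb; have [z hz] := h a b ha hb; exists z. Qed.

Lemma conjP (R : realType) d (Phi : seq 'rV[R]_d) b be (j k : int) :
  root_system Phi -> b \in Phi -> be \in Phi ->
  exists be' (k' : int), [/\ be' \in Phi,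
    forall v, dot (refl b j v) be - k%:~R = dot v be' - k'%:~R &
    refl be k \o refl b j = refl b j \o refl be' k'].
Proof.
move=> HP hb hbe; have [n hn] := rs_int HP hb hbe.
exists (refl b 0 be), (k - n * j); split.
- exact: rs_refl.
- by move=> v; apply: conj_dot (rs_neq0 HP hb) hn.
- by apply: funext => v /=; apply: conj_refl (rs_neq0 HP hb) (rs_neq0 HP hbe) hn.
Qed.

Lemma refl_flip (R : realType) d (b v : 'rV[R]_d) (k : int) : b != 0 ->
  dot (refl b k v) b - k%:~R = - (dot v b - k%:~R).
Proof. move=> /dotbb_neq0 hN; rewrite dot_refl; field; exact hN. Qed.

Lemma hyp_refl (R : realType) d (b be q : 'rV[R]_d) (j k : int) :
  b != 0 -> be != 0 -> dot q b = j%:~R ->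
  (forall v, dot v be = k%:~R <-> dot v b = j%:~R) -> refl be k = refl b j.
Proof.
move=> hb hbe hq hU.
have hN := dotbb_neq0 hb.
pose l := dot be b / dot b b; pose w := be - l *: b.
have hwb : dot w b = 0 by rewrite /w dotBl dotZl /l; field.
have hwbe : dot w be = 0.
  have hA : dot (q + w) be = k%:~R by apply/hU; rewrite dotDl hwb addr0.
  have hB : dot q be = k%:~R by apply/hU.
  rewrite dotDl hB in hA; apply: (addrI k%:~R); by rewrite hA addr0.
have hw : w = 0.
  apply/eqP; apply/negPn/negP => /dot_gt0; rewrite {2}/w dotBr dotZr hwbe hwb.
  by rewrite mulr0 subr0 ltxx.
have hbel : be = l *: b by apply/eqP; rewrite -subr_eq0 -/w hw.
have hl : l != 0 by apply: contra hbe => /eqP hl; rewrite hbel hl scale0r.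
have hk : k%:~R = l * j%:~R.
  have : dot q be = k%:~R by apply/hU.
  by rewrite hbel dotZr hq => <-.
apply: funext => v; rewrite !reflE hk hbel !(dotZr, dotZl).
apply/rowP => i; rewrite !mxE.
field; by rewrite hl hN.
Qed.

Lemma wall_refl (R : realType) d (Phi : seq 'rV[R]_d) p0 b be (j k : int) :
  root_system Phi -> wall Phi p0 b j -> be \in Phi ->
  (dot (refl b j p0) be - k%:~R) * (dot p0 be - k%:~R) < 0 -> refl be k = refl b j.
Proof.
move=> HP [hb [q [hq hcl hU]]] hbe hneg.
have [be' [k' [hbe' hD _]]] := conjP j k HP hb hbe.
have sq : refl b j q = q by rewrite reflE hq subrr mulr0 mul0r scale0r subr0.
have h1 := hcl be k hbe.
have h2 := hcl be' k' hbe'.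
rewrite -(hD q) -(hD p0) sq in h2.
have h0 := sign2 h1 h2 hneg.
have hqbe : dot q be = k%:~R by apply/eqP; rewrite -subr_eq0 h0.
apply: (hyp_refl (q := q)) => //; [exact: rs_neq0 HP hb | exact: rs_neq0 HP hbe | exact: hU hbe hqbe].
Qed.

Lemma regular_refl (R : realType) d (Phi : seq 'rV[R]_d) p b (j : int) :
  root_system Phi -> b \in Phi -> regular Phi p -> regular Phi (refl b j p).
Proof.
move=> HP hb hp be k hbe.
have [be' [k' [hbe' hD _]]] := conjP j k HP hb hbe.
rewrite -subr_eq0 hD subr_eq0; exact: hp.
Qed.

Lemma simple_word_cons (R : realType) d (Phi : seq 'rV[R]_d) p0 bk s :
  simple_word Phi p0 (bk :: s) <-> wall Phi p0 bk.1 bk.2 /\ simple_word Phi p0 s.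
Proof.
split.
- by move=> h; split; [apply: h; rewrite inE eqxx | move=> x hx; apply: h; rewrite inE hx orbT].
- by case=> h1 h2 x; rewrite inE => /orP[/eqP -> //| /h2].
Qed.

Lemma regular_word (R : realType) d (Phi : seq 'rV[R]_d) p0 s :
  root_system Phi -> regular Phi p0 -> simple_word Phi p0 s -> regular Phi (word_map s p0).
Proof.
move=> HP hp; elim: s => [//| [b j] s IH] /simple_word_cons [[hb _] hs] /=.
exact: regular_refl HP hb (IH hs).
Qed.

Lemma L1 (R : realType) d (Phi : seq 'rV[R]_d) p0 :
  root_system Phi -> regular Phi p0 ->
  forall s, simple_word Phi p0 s -> forall be (k : int), be \in Phi ->
  (dot (word_map s p0) be - k%:~R) * (dot p0 be - k%:~R) < 0 ->
  exists s', [/\ simple_word Phi p0 s', (size s' < size s)%N &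
                 word_map s' = refl be k \o word_map s].
Proof.
move=> HP hp; elim=> [|[b j] s IH] /=.
  by move=> _ be k _; rewrite -expr2 ltNge sqr_ge0.
move=> /simple_word_cons [hw hs] be k hbe hneg.
have hb : b \in Phi by case: hw.
have [be' [k' [hbe' hD hC]]] := conjP j k HP hb hbe.
rewrite hD in hneg.
case: (ltP ((dot (word_map s p0) be' - k'%:~R) * (dot p0 be' - k'%:~R)) 0) => hc.
  have [s'' [hs'' hsz hw'']] := IH hs be' k' hbe' hc.
  exists ((b, j) :: s''); split.
  - by apply/simple_word_cons.
  - by [].
  - rewrite /= hw''; apply: funext => v /=.
    by move: (congr1 (fun f => f (word_map s v)) hC) => /= ->.
have ha : dot p0 be' - k'%:~R != 0 by rewrite subr_eq0; apply: hp.
have hs0 := sign1 ha hc hneg.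
rewrite -hD in hs0.
have hr := wall_refl HP hw hbe hs0.
exists s; split => //; rewrite hr; apply: funext => v /=.
by rewrite refl_invol // (rs_neq0 HP hb).
Qed.

Definition good (R : realType) d (Phi : seq 'rV[R]_d) p0 (w : 'rV[R]_d -> 'rV[R]_d) :=
  exists s, simple_word Phi p0 s /\ w = word_map s.

Lemma ell_le (R : realType) d (Phi : seq 'rV[R]_d) p0 s :
  simple_word Phi p0 s -> (ell Phi p0 (word_map s) <= size s)%N.
Proof.
move=> hs; rewrite /ell; case: pselect => [h|hn].
  by case: ex_minnP => m _; apply; apply/asboolP; exists s.
by exfalso; apply: hn; exists (size s); apply/asboolP; exists s.
Qed.

Lemma ell_spec (R : realType) d (Phi : seq 'rV[R]_d) p0 w :
  good Phi p0 w -> exists s, [/\ simple_word Phi p0 s, size s = ell Phi p0 w & w = word_map s].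
Proof.
move=> [s0 [hs0 ->]]; rewrite /ell; case: pselect => [h|hn].
  case: ex_minnP => m /asboolP [s [hs [hsz hw]]] _.
  by exists s; split.
by exfalso; apply: hn; exists (size s0); apply/asboolP; exists s0.
Qed.

Lemma ell_pos_good (R : realType) d (Phi : seq 'rV[R]_d) p0 w :
  (0 < ell Phi p0 w)%N -> good Phi p0 w.
Proof.
rewrite /ell; case: pselect => [h|//].
by case: ex_minnP => m /asboolP [s [hs [hsz hw]]] _ _; exists s.
Qed.

Lemma word_map_cat (R : realType) d (s1 s2 : seq ('rV[R]_d * int)) v :
  word_map (s1 ++ s2) v = word_map s1 (word_map s2 v).
Proof. by elim: s1 => [//|bk s1 IH] /=; rewrite IH. Qed.

Lemma simple_word_cat (R : realType) d (Phi : seq 'rV[R]_d) p0 s1 s2 :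
  simple_word Phi p0 s1 -> simple_word Phi p0 s2 -> simple_word Phi p0 (s1 ++ s2).
Proof. by move=> h1 h2 x; rewrite mem_cat => /orP[/h1|/h2]. Qed.

Lemma good_comp (R : realType) d (Phi : seq 'rV[R]_d) p0 f g :
  good Phi p0 f -> good Phi p0 g -> good Phi p0 (f \o g).
Proof.
move=> [s1 [h1 ->]] [s2 [h2 ->]]; exists (s1 ++ s2); split.
  exact: simple_word_cat.
by apply: funext => v /=; rewrite word_map_cat.
Qed.

Lemma word_inv (R : realType) d (Phi : seq 'rV[R]_d) p0 s v :
  root_system Phi -> simple_word Phi p0 s -> word_map (rev s) (word_map s v) = v.
Proof.
move=> HP; elim: s => [//|[b j] s IH] /simple_word_cons [[hb _] hs].
by rewrite rev_cons -cats1 word_map_cat /= refl_invol ?IH // (rs_neq0 HP hb).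
Qed.

Lemma simple_word_rev (R : realType) d (Phi : seq 'rV[R]_d) p0 s :
  simple_word Phi p0 s -> simple_word Phi p0 (rev s).
Proof. by move=> h x; rewrite mem_rev; apply: h. Qed.

Lemma good_cancel (R : realType) d (Phi : seq 'rV[R]_d) p0 f g :
  root_system Phi -> good Phi p0 (f \o g) -> good Phi p0 g -> good Phi p0 f.
Proof.
move=> HP hfg [s [hs hg]].
have -> : f = (f \o g) \o word_map (rev s).
  apply: funext => v /=; rewrite hg.
  by have := word_inv v HP (simple_word_rev hs); rewrite revK => ->.
apply: good_comp hfg _; exists (rev s); split => //; exact: simple_word_rev.
Qed.

Lemma refl_three (R : realType) d (b : 'rV[R]_d) (k : int) : b != 0 ->
  refl b k = refl b (k + 1) \o refl b (k + 2) \o refl b (k + 1).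
Proof.
move=> /dotbb_neq0 hN; apply: funext => v /=.
rewrite !reflE !(dotBl, dotZl) !rmorphD /=.
apply/rowP => i; rewrite !mxE.
field; exact hN.
Qed.

Lemma side_dec (R : realType) d (Phi : seq 'rV[R]_d) p0 z be (k : int) :
  root_system Phi -> regular Phi p0 -> good Phi p0 z -> be \in Phi ->
  (ell Phi p0 z < ell Phi p0 (refl be k \o z))%N ->
  0 < (dot (z p0) be - k%:~R) * (dot p0 be - k%:~R).
Proof.
move=> HP hp hz hbe hl.
have [s [hs hsz hzs]] := ell_spec hz.
case: (ltP ((dot (z p0) be - k%:~R) * (dot p0 be - k%:~R)) 0) => hc.
  rewrite hzs in hc.
  have [s' [hs' hsz' hw']] := L1 HP hp hs hbe hc.
  have := ell_le hs'; rewrite hw' -hzs => hle.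
  by move: (leq_ltn_trans hle hsz'); rewrite hsz ltnNge (ltnW hl).
rewrite lt_def hc andbT mulf_neq0 // subr_eq0.
  by rewrite hzs; apply: (regular_word HP hp hs).
exact: hp.
Qed.

Lemma side_inc (R : realType) d (Phi : seq 'rV[R]_d) p0 z be (k : int) :
  root_system Phi -> regular Phi p0 -> good Phi p0 (refl be k \o z) -> be \in Phi ->
  0 < (dot (z p0) be - k%:~R) * (dot p0 be - k%:~R) ->
  (ell Phi p0 z < ell Phi p0 (refl be k \o z))%N.
Proof.
move=> HP hp hz hbe hpos.
have hbe0 := rs_neq0 HP hbe.
have [s [hs hsz hzs]] := ell_spec hz.
have hc : (dot (word_map s p0) be - k%:~R) * (dot p0 be - k%:~R) < 0.
  by rewrite -hzs /= refl_flip // mulNr oppr_lt0.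
have [s' [hs' hsz' hw']] := L1 HP hp hs hbe hc.
have hw2 : word_map s' = z by rewrite hw' -hzs; apply: funext => v /=; rewrite refl_invol.
have := ell_le hs'; rewrite hw2 => hle.
by rewrite -hsz; apply: leq_ltn_trans hle hsz'.
Qed.

Theorem proposition4p1 (R : realType) (d : nat) (Phi : seq 'rV[R]_d)
  (p0 : 'rV[R]_d) (HPhi : root_system Phi) (Hp0 : fundamental_point Phi p0)
  (x : 'rV[R]_d -> 'rV[R]_d) (hx : inW Phi x)
  (n : nat) (r : nat -> 'rV[R]_d -> 'rV[R]_d) (alpha : 'rV[R]_d) (c : int)
  (halpha : alpha \in Phi)
  (hr : forall t : nat, (1 <= t <= n)%N -> r t = refl alpha (c + t%:Z))
  (hlen : forall t : nat, (1 <= t <= n)%N ->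
     (ell Phi p0 (prodr r t.-1 \o x) < ell Phi p0 (prodr r t \o x))%N) :
  forall t : nat, (3 <= t <= n)%N ->
    forall y : 'rV[R]_d -> 'rV[R]_d, H1 Phi p0 (r t.-1) y -> H1 Phi p0 (r t) y.
Proof.
have hp : regular Phi p0 by case: Hp0.
have ha0 := rs_neq0 HPhi halpha.
pose u i := prodr r i \o x.
have hu : forall i, u i.+1 = r i.+1 \o u i by [].
have G : forall i, (1 <= i <= n)%N -> good Phi p0 (u i).
  move=> i hi; apply: ell_pos_good.
  by apply: leq_ltn_trans (hlen i hi); apply: leq0n.
have Rg : forall i, (2 <= i <= n)%N -> good Phi p0 (r i).
  case=> [|[|i]] // hi; apply: (good_cancel HPhi (g := u i.+1)).
    by rewrite -hu; apply: G; move: hi; lia.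
  by apply: G; move: hi; lia.
move=> t; case: t => [|[|[|m]]] // /andP [_ hmn] y [hy hly].
have hin : forall i, (1 <= i <= m.+3)%N -> (1 <= i <= n)%N.
  by move=> i /andP [h1 h2]; rewrite h1 (leq_trans h2 hmn).
have R1 : good Phi p0 (r 1).
  rewrite (hr 1) ?hin //.
  have -> : c + 1%:Z = (c + 1%:Z) + 0 by rewrite addr0.
  rewrite (refl_three _ ha0).
  have e1 : c + 1%:Z + 0 + 1 = c + 2%:Z by rewrite addr0 -addrA.
  have e2 : c + 1%:Z + 0 + 2 = c + 3%:Z by rewrite addr0 -addrA.
  rewrite e1 e2 -(hr 2) ?hin // -(hr 3) ?hin //.
  by apply: good_comp; [apply: good_comp|]; apply: Rg; rewrite /= ?(leq_trans _ hmn).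
have Gx : good Phi p0 (u 0).
  have -> : u 0 = r 1 \o u 1.
    apply: funext => v; rewrite hu /= (hr 1) ?hin // refl_invol //.
  by apply: good_comp R1 (G 1 (hin 1 isT)).
have Gall : forall i, (i <= n)%N -> good Phi p0 (u i).
  by case=> [//|i] hi; apply: G; rewrite hi.
pose P := dot p0 alpha.
have step : forall i, (1 <= i <= n)%N ->
  0 < (dot (u i.-1 p0) alpha - (c + i%:Z)%:~R) * (P - (c + i%:Z)%:~R).
  case=> [//|i] hi; apply: (side_dec HPhi hp _ halpha).
    by apply: (Gall i); move: hi; lia.
  by rewrite -(hr _ hi); apply: hlen.
have flip : forall i, (1 <= i <= n)%N ->
   dot (u i p0) alpha - (c + i%:Z)%:~R = - (dot (u i.-1 p0) alpha - (c + i%:Z)%:~R).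
  case=> [//|i] hi; by rewrite hu /= (hr _ hi) refl_flip.
have Gry : good Phi p0 (r m.+2 \o y).
  by apply: ell_pos_good; apply: leq_ltn_trans hly; apply: leq0n.
have Gy : good Phi p0 y.
  have -> : y = r m.+2 \o (r m.+2 \o y).
    apply: funext => v /=; rewrite (hr m.+2); last by move: hmn; lia.
    by rewrite refl_invol.
  by apply: (good_comp (Rg m.+2 _) Gry); move: hmn; lia.
have hY := side_dec HPhi hp Gy halpha (k := c + m.+2%:Z).
have hr2 : r m.+2 = refl alpha (c + m.+2%:Z) by apply: hr; move: hmn; lia.
have hr3 : r m.+3 = refl alpha (c + m.+3%:Z) by apply: hr; move: hmn; lia.
rewrite -hr2 in hY; have {hY} hY := hY hly.
split => //.
rewrite hr3; apply: (side_inc HPhi hp _ halpha).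
  by rewrite -hr3; apply: (good_comp (Rg m.+3 _) Gy); move: hmn; lia.
have hi1 : (0 < m.+1 <= n)%N by move: hmn; lia.
have hi2 : (0 < m.+2 <= n)%N by move: hmn; lia.
have hi3 : (0 < m.+3 <= n)%N by move: hmn; lia.
have s1 := step m.+1 hi1.
have s2 := step m.+2 hi2.
have s3 := step m.+3 hi3.
have f1 := flip m.+1 hi1.
have f2 := flip m.+2 hi2.
have e : forall j : nat, ((c + j.+1%:Z)%:~R : R) = (c + j%:Z)%:~R + 1.
  by move=> j; rewrite -[j.+1]addn1 PoszD addrA rmorphD.
rewrite /= in s1 s2 s3 f1 f2.
rewrite !e in s1 f1 s2 s3 f2 hY *.
move: s1 s2 s3 f1 f2 hY.
rewrite -/P.
set k0 := ((c + m%:Z)%:~R : R).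
set a := dot (u m p0) alpha.
set b := dot (u m.+1 p0) alpha.
set ee := dot (u m.+2 p0) alpha.
set Y := dot (y p0) alpha.
move=> s1 s2 s3 f1 f2 hY.
have hb : b = 2 * (k0 + 1) - a by lra.
have he : ee = a + 2 by lra.
rewrite hb in s2; rewrite he in s3.
move: s1 s2 s3 hY; set K := k0 + 1.
have -> : 2 * K - a - (K + 1) = K - a - 1 by ring.
have -> : a + 2 - (K + 1 + 1) = a - K by ring.
have -> : K + 1 + 1 = K + 2 by ring.
move=> s1 s2 s3 hY.
rewrite !opprD !addrA in s2 s3 hY *.
move: s1 s2 s3 hY; rewrite /K => s1 s2 s3 hY; nra.
Qed.
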